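(* Let $\Phi\colon\mathcal{M}(2;\mathbb{C})\to\mathcal{M}(2;\mathbb{C})$ be a polynomial automorphism compatible with conjugation. Then the discriminant hypersurface $\Delta=\{\mathrm{M}\in\mathcal{M}(2;\mathbb{C}):4\det\mathrm{M}-(\mathrm{tr}\,\mathrm{M})^2=0\}$ is invariant by $\Phi$; consequently the conic $v=u^2/4$ is invariant by $\mathrm{Sq}\,\Phi$.
   Context: $\mathrm{Inv}\colon\mathcal{M}(2;\mathbb{C})\to\mathbb{C}^2$, $\mathrm{M}\mapsto(\mathrm{tr}\,\mathrm{M},\det\mathrm{M})$. For $\Phi$ compatible with conjugation (i.e. $\mathrm{A}\Phi(\mathrm{M})\mathrm{A}^{-1}=\Phi(\mathrm{A}\mathrm{M}\mathrm{A}^{-1})$ for all $\mathrm{A}\in\mathrm{GL}(2;\mathbb{C})$), $\mathrm{Sq}\,\Phi\colon\mathbb{C}^2\dashrightarrow\mathbb{C}^2$ is the rational map, in coordinates $(u,v)$, with $\mathrm{Inv}\circ\Phi=\mathrm{Sq}\,\Phi\circ\mathrm{Inv}$. *)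

(* Defs.v *)
From HB Require Import structures.
From mathcomp Require Import all_boot all_order all_algebra.
From mathcomp Require Import complex.
From mathcomp Require Import Rstruct.
From mathcomp Require Import mpoly.
Set Implicit Arguments. Unset Strict Implicit. Unset Printing Implicit Defensive.
Import Order.TTheory GRing.Theory Num.Theory.
Local Open Scope ring_scope.
Local Open Scope complex_scope.

Definition CC : Type := (Rdefinitions.R)[i].
Definition Mat2 : Type := 'M[CC]_2.

Definition mx_coords (M : Mat2) : 'I_4 -> CC :=
  fun k => M (inord (k %/ 2)) (inord (k %% 2)).

Definition polynomial_map (Phi : Mat2 -> Mat2) : Prop :=
  exists P : 'I_2 -> 'I_2 -> {mpoly CC[4]},
    forall M i j, Phi M i j = (P i j).@[mx_coords M].

Definition polynomial_automorphism (Phi : Mat2 -> Mat2) : Prop :=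
  polynomial_map Phi /\
  exists Psi : Mat2 -> Mat2,
    [/\ polynomial_map Psi, cancel Phi Psi & cancel Psi Phi].

Definition compatible_with_conjugation (Phi : Mat2 -> Mat2) : Prop :=
  forall A : Mat2, A \in unitmx ->
    forall M : Mat2, A *m Phi M *m invmx A = Phi (A *m M *m invmx A).

Definition Inv (M : Mat2) : CC * CC := (\tr M, \det M).

Definition in_Delta (M : Mat2) : Prop := 4 * \det M - (\tr M) ^+ 2 = 0.

Definition in_conic (p : CC * CC) : Prop := p.2 = p.1 ^+ 2 / 4.

(* Main.v *)
Require Import Defs.
From HB Require Import structures.
From mathcomp Require Import all_boot all_order all_algebra.
From mathcomp Require Import complex Rstruct mpoly.
From mathcomp Require Import ring.
Import Order.TTheory GRing.Theory Num.Theory.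
Local Open Scope ring_scope.
Lemma det2 (X : Mat2) : \det X = X 0 0 * X 1 1 - X 0 1 * X 1 0.
Proof.
rewrite (expand_det_row _ 0) !big_ord_recl big_ord0 /cofactor !det_mx11 /= !mxE.
have -> : lift 0 (0:'I_1) = 1 :> 'I_2 by apply/val_inj.
have -> : lift 1 (0:'I_1) = 0 :> 'I_2 by apply/val_inj.
by rewrite /bump /= expr0 expr1 mul1r addr0 mulN1r mulrN.
Qed.
Lemma tr2 (X : Mat2) : \tr X = X 0 0 + X 1 1.
Proof.
rewrite /mxtrace !big_ord_recl big_ord0 addr0.
by have -> : lift ord0 (ord0 : 'I_1) = 1 :> 'I_2 by apply/val_inj.
Qed.
Lemma mul2E (A B : Mat2) i j : (A *m B) i j = A i 0 * B 0 j + A i 1 * B 1 j.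
Proof.
rewrite mxE !big_ord_recl big_ord0 addr0.
by have -> : lift ord0 (ord0 : 'I_1) = 1 :> 'I_2 by apply/val_inj.
Qed.

Lemma ord2_cases (i : 'I_2) : i = 0 \/ i = 1.
Proof. by case: i => [[|[|//]] Hi]; [left|right]; apply/val_inj. Qed.

Lemma comm_disc (X N : Mat2) : X  *m  N = N  *m  X -> N != 0 ->
  \tr N = 0 -> \det N = 0 -> in_Delta X.
Proof.
move=> H nz; rewrite tr2 det2 => ht hd.
have H00 := congr1 (fun A : Mat2 => A 0 0) H.
have H01 := congr1 (fun A : Mat2 => A 0 1) H.
have H10 := congr1 (fun A : Mat2 => A 1 0) H.
rewrite /= !mul2E in H00 H01 H10.
rewrite /in_Delta tr2 det2.
move: H00 H01 H10 ht hd nz.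
set x := X 0 0; set y := X 0 1; set z := X 1 0; set w := X 1 1.
set p := N 0 0; set q := N 0 1; set r := N 1 0; set s := N 1 1.
move=> H00 H01 H10 ht hd nz.
have hs : s = - p by apply/eqP; rewrite -addr_eq0 addrC ht.
have e1 : q * (x-w) - 2 * p * y = 0.
  have -> : q * (x-w)-2 * p * y = (x * q+y * s) - (p * y+q * w) by rewrite hs; ring.
  by rewrite H01 subrr.
have e4 : r * (x-w) - 2 * p * z = 0.
  have -> : r * (x-w)-2 * p * z = (r * x+s * z) - (z * p+w * r) by rewrite hs; ring.
  by rewrite H10 subrr.
have e2 : q * z - y * r = 0.
  have -> : q * z - y * r = (p * x+q * z) - (x * p+y * r) by ring.
  by rewrite H00 subrr.
have e3 : p^+2 + q * r = 0.
  have -> : p^+2 + q * r = - (p * s - q * r) by rewrite hs; ring.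
  by rewrite hd oppr0.
set T := 4 * (x * w - y * z) - (x + w) ^+ 2.
have Tq : T * q^+2 = - ((q * (x-w) - 2 * p * y) * (q * (x-w)+2 * p * y) + 4 * q * y * (q * z - y * r) + 4 * y^+2 * (p^+2+q * r)).
  by rewrite /T; ring.
have Tr : T * r^+2 = - ((r * (x-w) - 2 * p * z) * (r * (x-w)+2 * p * z) + 4 * r * z * (r * y - q * z) + 4 * z^+2 * (p^+2+q * r)).
  by rewrite /T; ring.
have e2' : r * y - q * z = 0 by rewrite -oppr0 -e2; ring.
have [q0|qn0] := eqVneq q 0.
  have [r0|rn0] := eqVneq r 0.
    exfalso; move/eqP: nz; apply.
    move/eqP: e3; rewrite q0 mul0r addr0 expf_eq0 /= => /eqP p0.
    apply/matrixP => i j; rewrite mxE.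
    by case: (ord2_cases i) => ->; case: (ord2_cases j) => ->;
      rewrite -?/p -?/q -?/r -?/s ?hs ?p0 ?q0 ?r0 ?oppr0.
  have : T * r^+2 = 0 by rewrite Tr e4 e2' e3 !mulr0 mul0r !addr0 oppr0.
  by move/eqP; rewrite mulf_eq0 expf_eq0 (negbTE rn0) andbF orbF => /eqP.
have : T * q^+2 = 0 by rewrite Tq e1 e2 e3 !mulr0 mul0r !addr0 oppr0.
by move/eqP; rewrite mulf_eq0 expf_eq0 (negbTE qn0) andbF orbF => /eqP.
Qed.

Lemma two_neq0 : (2 : CC) != 0. Proof. by rewrite pnatr_eq0. Qed.
Lemma four_neq0 : (4 : CC) != 0. Proof. by rewrite pnatr_eq0. Qed.

Lemma exists_N (M : Mat2) : in_Delta M ->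
  exists N : Mat2, [/\ N != 0, \tr N = 0, \det N = 0 & M *m N = N *m M].
Proof.
move=> hM.
set c := \tr M / 2.
set N0 := M - c%:M.
have [N00|N0n] := eqVneq N0 0.
  have Mc : M = c%:M by apply/eqP; rewrite -subr_eq0 -/N0 N00.
  exists (delta_mx 0 1); split.
  - apply/negP => /eqP/matrixP/(_ 0 1); rewrite !mxE /=; apply/eqP; exact: oner_neq0.
  - by rewrite tr2 !mxE /= addr0.
  - by rewrite det2 !mxE /= mul0r mulr0 subr0.
  - by clearbody N0 c; rewrite Mc scalar_mxC.
exists N0; split => //.
- rewrite tr2 !mxE /= !mulr1n /c tr2; by field.
- move: hM; rewrite /in_Delta /N0 /c !det2 !tr2 !mxE /= !mulr1n !mulr0n !subr0 => hM.
  apply: (mulIf four_neq0); rewrite mul0r -hM.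
  by field.
- by rewrite mulmxBr mulmxBl mul_mx_scalar mul_scalar_mx.
Qed.

Lemma delta_inv (F : Mat2 -> Mat2) : compatible_with_conjugation F ->
  forall M, in_Delta M -> in_Delta (F M).
Proof.
move=> hF M hM.
have [N [nz trN detN cMN]] := exists_N M hM.
set A : Mat2 := 1%:M + N.
have detA : \det A = 1.
  move: trN detN; rewrite det2 tr2 det2 !mxE /= !mulr1n !mulr0n !add0r => t d.
  transitivity (1 + (N 0 0 + N 1 1) + (N 0 0 * N 1 1 - N 0 1 * N 1 0)); first by ring.
  by rewrite t d !addr0.
have Au : A \in unitmx by rewrite unitmxE detA unitr1.
have cAM : A *m M = M *m A by rewrite mulmxDl mulmxDr mul1mx mulmx1 cMN.
have := hF A Au M.
rewrite cAM -[M *m A *m _]mulmxA mulmxV // mulmx1 => h.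
have cAF : A *m F M = F M *m A by rewrite -{2}h mulmxKV.
apply: (comm_disc (F M) N) => //.
move: cAF; rewrite mulmxDl mulmxDr mul1mx mulmx1 => /addrI.
by move=> ->.
Qed.

Lemma Delta_conic (M : Mat2) : in_Delta M <-> in_conic (Inv M).
Proof.
rewrite /in_Delta /in_conic /Inv /=; split => h.
  have : \det M = (4 * \det M - (\tr M)^+2 + (\tr M)^+2) / 4 by field.
  by rewrite h add0r.
rewrite h; by field.
Qed.

Lemma Inv_scalar (u : CC) : Inv ((u / 2)%:M : Mat2) = (u, u ^+ 2 / 4).
Proof.
rewrite /Inv mxtrace_scalar det_scalar; congr pair; by field.
Qed.

Theorem proposition2p25 (Phi : Mat2 -> Mat2) :
  polynomial_automorphism Phi ->
  compatible_with_conjugation Phi ->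
  ((forall M : Mat2, in_Delta M -> in_Delta (Phi M)) /\
   (forall N : Mat2, in_Delta N -> exists2 M : Mat2, in_Delta M & Phi M = N)) /\
  (forall SqPhi : CC * CC -> CC * CC,
     (forall M : Mat2, Inv (Phi M) = SqPhi (Inv M)) ->
     (forall p : CC * CC, in_conic p -> in_conic (SqPhi p)) /\
     (forall q : CC * CC, in_conic q -> exists2 p : CC * CC, in_conic p & SqPhi p = q)).
Proof.
move=> [_ [Psi [_ PhiK PsiK]]] hPhi.
have hPsi : compatible_with_conjugation Psi.
  move=> A Au M; apply: (can_inj PhiK).
  by rewrite -hPhi // !PsiK.
have fw := delta_inv Phi hPhi.
have bw : forall N : Mat2, in_Delta N -> exists2 M : Mat2, in_Delta M & Phi M = N.
  by move=> N hN; exists (Psi N); [exact: delta_inv Psi hPsi N hN | exact: PsiK].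
split => // Sq hSq; split.
  move=> [u v] /= hp; rewrite /in_conic /= in hp; rewrite hp -Inv_scalar -hSq.
  apply/Delta_conic/fw/Delta_conic; rewrite Inv_scalar /in_conic //.
move=> [u v] /= hq; rewrite /in_conic /= in hq.
have hN : in_Delta ((u / 2)%:M : Mat2) by apply/Delta_conic; rewrite Inv_scalar.
have [M hM eM] := bw _ hN.
exists (Inv M); first exact/Delta_conic.
by rewrite -hSq eM Inv_scalar hq.
Qed.
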